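(* Let $T$ be a tree and $g,h$ isometries of $T$. The product $gh$ is elliptic if and only if one of the following holds: (1) $g$ and $h$ are both elliptic and $\mathrm{Fix}(g)\cap\mathrm{Fix}(h)\neq\emptyset$; (2) $\tau(h)<\tau(g)$ (so $g$ is loxodromic) and $h$ creases an arc of $A(g)$ of length at least $\tfrac12(\tau(g)-\tau(h))$ in the negative direction; or the same situation with the roles of $g$ and $h$ exchanged; (3) $g$ and $h$ are both loxodromic, $\tau(g)=\tau(h)\le\ell(A(g)\cap A(h))$, and $g,h$ translate in opposite directions along $A(g)\cap A(h)$.
   Context: $T$ is a simplicial tree (with its path metric, edges of length 1) or a real tree. An isometry $g$ is elliptic if it fixes a point; $\mathrm{Fix}(g)$ is its fixed-point set and $\tau(g)=0$. Otherwise $g$ is loxodromic: it preserves a unique bi-infinite geodesic $A(g)$ (its axis) and translates along it by $\tau(g)>0$ (translation length). An arc is a geodesic segment; $\ell(\alpha)$ denotes its length. Two oriented arcs whose union lies in a single arc are coherent if their orientations are restrictions of one orientation of an arc containing both, and incoherent otherwise. An isometry $h$ creases an arc $\alpha$ of an arc or geodesic $\gamma$ if $\alpha\cup h\alpha\subseteq\gamma$, $\alpha$ and $h\alpha$ share at most an endpoint, and for an orientation $\vec\alpha$ the arcs $\vec\alpha$ and $h\vec\alpha$ are incoherent. When $\gamma=A(g)$ is oriented in the direction of translation of $g$, $h$ creases $\alpha$ in the negative direction if moreover $h\alpha$ precedes $\alpha$ along $A(g)$. *)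

(* Defs.v *)
From Stdlib Require Import Reals Lra.
Open Scope R_scope.

(** A real tree: a metric space (X,d) that is geodesic and 0-hyperbolic
    (four-point condition).  The geometric realization of a simplicial tree
    (edges of length 1, path metric) is such a space. *)
Record real_tree {X : Type} (d : X -> X -> R) : Prop := {
  rt_nonneg : forall x y, 0 <= d x y;
  rt_sep : forall x y, d x y = 0 <-> x = y;
  rt_sym : forall x y, d x y = d y x;
  rt_tri : forall x y z, d x z <= d x y + d y z;
  rt_geodesic : forall x y, exists p : R -> X,
      p 0 = x /\ p (d x y) = y /\
      forall s t, 0 <= s <= d x y -> 0 <= t <= d x y ->
        d (p s) (p t) = Rabs (s - t);
  rt_four_point : forall x y z w,
      d x y + d z w <= Rmax (d x z + d y w) (d x w + d y z)
}.

Definition isometry {X : Type} (d : X -> X -> R) (g : X -> X) : Prop :=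
  (forall x y, d (g x) (g y) = d x y) /\ (forall y, exists x, g x = y).

Definition elliptic {X : Type} (g : X -> X) : Prop := exists x, g x = x.

Definition geodesic_line {X : Type} (d : X -> X -> R) (gam : R -> X) : Prop :=
  forall s t, d (gam s) (gam t) = Rabs (s - t).

(** [axis d g gam tau]: gam parametrizes an axis A(g) = range gam of g,
    oriented in the direction of translation, and g translates along it
    by tau > 0:  g (gam t) = gam (t + tau). *)
Definition axis {X : Type} (d : X -> X -> R) (g : X -> X) (gam : R -> X)
    (tau : R) : Prop :=
  geodesic_line d gam /\ 0 < tau /\ forall t, g (gam t) = gam (t + tau).

Definition loxodromic {X : Type} (d : X -> X -> R) (g : X -> X) : Prop :=
  exists gam tau, axis d g gam tau.

Definition transl_length {X : Type} (d : X -> X -> R) (g : X -> X) (t : R)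
    : Prop :=
  (elliptic g /\ t = 0) \/ (exists gam, axis d g gam t).

(** [creases_neg h gam a b]: with gam the (oriented) axis of g, h creases the
    arc alpha = gam([a,b]) of A(g) in the negative direction:
    - h alpha lies in A(g);
    - orienting alpha from gam a to gam b, h alpha runs from gam s = h (gam a)
      to gam s' = h (gam b) with s' < s (incoherent orientations);
    - h alpha = gam([s',s]) precedes alpha, sharing at most an endpoint: s <= a. *)
Definition creases_neg {X : Type} (h : X -> X) (gam : R -> X) (a b : R)
    : Prop :=
  a < b /\
  (forall t, a <= t <= b -> exists u, h (gam t) = gam u) /\
  exists s s', h (gam a) = gam s /\ h (gam b) = gam s' /\ s' < s /\ s <= a.

Definition crease_condition {X : Type} (d : X -> X -> R) (g h : X -> X)
    : Prop :=
  exists (gam : R -> X) (tg th a b : R),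
    axis d g gam tg /\ transl_length d h th /\ th < tg /\
    creases_neg h gam a b /\ (tg - th) / 2 <= b - a.

Definition opposite_axes_condition {X : Type} (d : X -> X -> R) (g h : X -> X)
    : Prop :=
  exists (gam del : R -> X) (tau a b c : R),
    axis d g gam tau /\ axis d h del tau /\ tau <= b - a /\
    forall t, a <= t <= b -> gam t = del (c - t).

(* Main.v *)
Require Import Defs.
From Stdlib Require Import Reals Lra Lia Classical ClassicalEpsilon.
Open Scope R_scope.

Ltac rabs_step :=
  match goal with
  | |- context [Rabs ?x] => destruct (Rcase_abs x);
      [rewrite (Rabs_left x) by lra | rewrite (Rabs_right x) by lra]
  | H : context [Rabs ?x] |- _ => destruct (Rcase_abs x);
      [rewrite (Rabs_left x) in H by lra | rewrite (Rabs_right x) in H by lra]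
  end.
Ltac rabs := repeat rabs_step.


Lemma fp4 {X} {d : X -> X -> R} (HT : real_tree d) x y z w :
  d x y + d z w <= d x z + d y w \/ d x y + d z w <= d x w + d y z.
Proof.
  pose proof (rt_four_point d HT x y z w) as H.
  unfold Rmax in H; destruct (Rle_dec _ _); [right|left]; lra.
Qed.

Lemma dsym {X} {d : X -> X -> R} (HT : real_tree d) x y : d x y = d y x.
Proof. apply (rt_sym d HT). Qed.
Lemma dtri {X} {d : X -> X -> R} (HT : real_tree d) x y z : d x z <= d x y + d y z.
Proof. apply (rt_tri d HT). Qed.
Lemma dpos {X} {d : X -> X -> R} (HT : real_tree d) x y : 0 <= d x y.
Proof. apply (rt_nonneg d HT). Qed.
Lemma drefl {X} {d : X -> X -> R} (HT : real_tree d) x : d x x = 0.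
Proof. apply (rt_sep d HT). reflexivity. Qed.
Lemma deq0 {X} {d : X -> X -> R} (HT : real_tree d) x y : d x y <= 0 -> x = y.
Proof. intro H. apply (rt_sep d HT). pose proof (dpos HT x y). lra. Qed.

Lemma two_pts {X} {d : X -> X -> R} (HT : real_tree d) u w p q L a b :
  d u w = L -> d u p = a -> d p w = L - a -> d u q = b -> d q w = L - b ->
  d p q <= Rabs (a - b).
Proof.
  intros H1 H2 H3 H4 H5.
  destruct (fp4 HT p q u w) as [H|H];
  try rewrite (dsym HT p u) in H; try rewrite (dsym HT q u) in H; rabs; lra.
Qed.

Lemma uniq_pt {X} {d : X -> X -> R} (HT : real_tree d) u w p q L a :
  d u w = L -> d u p = a -> d p w = L - a -> d u q = a -> d q w = L - a -> p = q.
Proof.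
  intros. apply (deq0 HT). pose proof (two_pts HT u w p q L a a).
  replace (a - a) with 0 in H4 by ring. rewrite Rabs_R0 in H4. auto.
Qed.

Lemma two_pts_eq {X} {d : X -> X -> R} (HT : real_tree d) u w p q L a b :
  d u w = L -> d u p = a -> d p w = L - a -> d u q = b -> d q w = L - b ->
  d p q = Rabs (a - b).
Proof.
  intros H1 H2 H3 H4 H5. pose proof (two_pts HT u w p q L a b H1 H2 H3 H4 H5).
  pose proof (dtri HT u p q) as T1. pose proof (dtri HT u q p) as T2. rewrite (dsym HT q p) in T2.
  rabs; lra.
Qed.

Lemma gluing {X} {d : X -> X -> R} (HT : real_tree d) u v w z :
  d u w = d u v + d v w -> d v z = d v w + d w z -> 0 < d v w ->
  d u z = d u v + d v w + d w z.
Proof.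
  intros H1 H2 H3.
  destruct (fp4 HT u w v z) as [H|H].
  - pose proof (dpos HT u v). lra.
  - rewrite (dsym HT w v) in H. pose proof (dtri HT u v z). lra.
Qed.

Lemma seg_point {X} {d : X -> X -> R} (HT : real_tree d) u v s :
  0 <= s <= d u v -> exists z, d u z = s /\ d z v = d u v - s.
Proof.
  intros Hs. destruct (rt_geodesic d HT u v) as [p [H0 [H1 H2]]].
  exists (p s). split.
  - rewrite <- H0 at 1. rewrite H2 by (pose proof (dpos HT u v); lra).
    rabs; lra.
  - rewrite <- H1 at 1. rewrite H2 by (pose proof (dpos HT u v); lra).
    rabs; lra.
Qed.

Lemma tripod {X} {d : X -> X -> R} (HT : real_tree d) u v x z L b :
  d u v = L -> d u z = b -> d z v = L - b ->
  d x z = (d x u + d x v - L) / 2 + Rabs (b - (d x u + L - d x v) / 2).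
Proof.
  intros H1 H2 H3.
  pose proof (dtri HT x z u). pose proof (dtri HT x z v).
  rewrite (dsym HT z u) in H.
  destruct (fp4 HT x z u v) as [H4|H4]; try rewrite (dsym HT z u) in H4;
  rabs; lra.
Qed.


Lemma line_F {X} {d : X -> X -> R} (HT : real_tree d) gam x L :
  geodesic_line d gam -> 0 <= L -> forall t, -L <= t <= L ->
  d x (gam t) = (d x (gam (-L)) + d x (gam L) - 2*L)/2
                + Rabs (t - (d x (gam (-L)) - d x (gam L))/2).
Proof.
  intros Hg HL t Ht.
  rewrite (tripod HT (gam (-L)) (gam L) x (gam t) (2*L) (t + L)).
  - f_equal. f_equal. field.
  - rewrite Hg. rabs; lra.
  - rewrite Hg. rabs; lra.
  - rewrite Hg. rabs; lra.
Qed.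

Lemma proj_line {X} {d : X -> X -> R} (HT : real_tree d) gam x :
  geodesic_line d gam -> exists c e, 0 <= e /\ forall t, d x (gam t) = e + Rabs (t - c).
Proof.
  intros Hg.
  set (K := d x (gam 0) + 1).
  assert (HK : 1 <= K) by (pose proof (dpos HT x (gam 0)); unfold K; lra).
  assert (Hstab : forall L, K <= L ->
     (d x (gam (-L)) - d x (gam L))/2 = (d x (gam (-K)) - d x (gam K))/2 /\
     (d x (gam (-L)) + d x (gam L) - 2*L)/2 = (d x (gam (-K)) + d x (gam K) - 2*K)/2).
  { intros L HL.
    pose proof (line_F HT gam x L Hg ltac:(lra)) as F.
    set (cL := (d x (gam (-L)) - d x (gam L))/2) in *.
    set (eL := (d x (gam (-L)) + d x (gam L) - 2*L)/2) in *.
    assert (He : 0 <= eL).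
    { unfold eL. pose proof (dtri HT (gam (-L)) x (gam L)). rewrite Hg in H.
      rewrite (dsym HT (gam (-L)) x) in H. rabs; lra. }
    pose proof (F 0 ltac:(lra)) as F0.
    assert (Hc : Rabs cL <= K - 1) by (unfold K; rabs; lra).
    pose proof (F (-K) ltac:(lra)) as F1.
    pose proof (F K ltac:(lra)) as F2.
    split; rabs; lra. }
  exists ((d x (gam (-K)) - d x (gam K))/2), ((d x (gam (-K)) + d x (gam K) - 2*K)/2).
  split.
  { pose proof (dtri HT (gam (-K)) x (gam K)). rewrite Hg in H.
    rewrite (dsym HT (gam (-K)) x) in H. rabs; lra. }
  intros t.
  set (L := Rmax K (Rabs t)).
  assert (HL1 : K <= L) by apply Rmax_l.
  assert (HL2 : Rabs t <= L) by apply Rmax_r.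
  destruct (Hstab L HL1) as [E1 E2]. rewrite <- E1, <- E2.
  apply (line_F HT gam x L Hg). lra. rabs; lra.
Qed.


Lemma axis_shift {X} {d : X -> X -> R} (HT : real_tree d) g gam tau z c e :
  isometry d g -> axis d g gam tau ->
  (forall t, d z (gam t) = e + Rabs (t - c)) ->
  forall t, d (g z) (gam t) = e + Rabs (t - tau - c).
Proof.
  intros [Hi _] [Hl [Ht Hgam]] Hz t.
  replace (gam t) with (g (gam (t - tau))) by (rewrite Hgam; f_equal; ring).
  rewrite Hi. apply Hz.
Qed.

Lemma axis_disp {X} {d : X -> X -> R} (HT : real_tree d) g gam tau z c e :
  isometry d g -> axis d g gam tau ->
  (forall t, d z (gam t) = e + Rabs (t - c)) ->
  d z (g z) = 2*e + tau.
Proof.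
  intros Hi Ha Hz. pose proof (axis_shift HT g gam tau z c e Hi Ha Hz) as Hs.
  destruct Ha as [Hl [Ht Hgam]].
  assert (A1 : d z (gam (c+tau)) = e + tau) by (rewrite Hz; rabs; lra).
  assert (A2 : d z (gam c) = e) by (rewrite Hz; rabs; lra).
  assert (A3 : d (gam c) (gam (c+tau)) = tau) by (rewrite Hl; rabs; lra).
  assert (A4 : d (gam c) (g z) = e + tau) by (rewrite dsym, Hs; auto; rabs; lra).
  assert (A5 : d (gam (c+tau)) (g z) = e) by (rewrite dsym, Hs; auto; rabs; lra).
  pose proof (gluing HT z (gam c) (gam (c+tau)) (g z)) as G.
  rewrite A1, A2, A3, A4, A5 in G. lra.
Qed.

Definition fold_prop {X} (d : X -> X -> R) (h : X -> X) (th : R) : Prop :=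
  0 <= th /\ forall z, th <= d z (h z) /\
  forall m p u, d z m = d z (h z) / 2 -> d m (h z) = d z (h z) / 2 ->
    th / 2 <= u <= d z (h z) / 2 -> d m p = u -> d p z = d z (h z) / 2 - u ->
    d m (h p) = u /\ d (h p) (h z) = d z (h z) / 2 - u.

Lemma mid_fixed {X} {d : X -> X -> R} (HT : real_tree d) h z m :
  isometry d h -> d z (h (h z)) <= d z (h z) ->
  d z m = d z (h z) / 2 -> d m (h z) = d z (h z) / 2 -> h m = m.
Proof.
  intros [Hi _] HE H1 H2.
  remember (d z (h z)) as D eqn:ED.
  assert (HD : d (h z) (h (h z)) = D) by (rewrite Hi; auto).
  assert (B : d (h (h z)) m <= D/2).
  { destruct (fp4 HT (h (h z)) m z (h z)) as [F|F];
    rewrite ?(dsym HT (h (h z)) z), ?(dsym HT (h (h z)) (h z)), ?HD in F;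
    rewrite ?(dsym HT m z), ?H1, ?H2, <- ?ED in F; lra. }
  assert (B2 : d m (h (h z)) = D - D/2).
  { pose proof (dtri HT (h z) m (h (h z))). rewrite dsym in B; auto.
    rewrite (dsym HT (h z) m), H2, HD in H. lra. }
  symmetry.
  apply (uniq_pt HT (h z) (h (h z)) m (h m) D (D/2)); auto.
  - rewrite dsym; auto.
  - rewrite Hi. auto.
  - rewrite Hi, H2. lra.
Qed.

Lemma fold_elliptic {X} {d : X -> X -> R} (HT : real_tree d) h :
  isometry d h -> elliptic h -> fold_prop d h 0.
Proof.
  intros Hiso [q Hq]. pose proof Hiso as [Hi _].
  split; [lra|]. intros z.
  split; [apply dpos; auto|].
  assert (HE : d z (h (h z)) <= d z (h z)).
  { assert (Q1 : d (h z) q = d z q) by (rewrite <- Hq at 1; rewrite Hi; auto).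
    assert (Q2 : d (h (h z)) q = d z q) by (rewrite <- Hq at 1; rewrite Hi; auto).
    assert (Q3 : d (h (h z)) (h z) = d z (h z)) by (rewrite Hi, dsym; auto).
    destruct (fp4 HT z (h (h z)) (h z) q) as [F|F]; lra. }
  intros m p u H1 H2 Hu H3 H4.
  pose proof (mid_fixed HT h z m Hiso HE H1 H2) as Hm.
  rewrite <- Hm at 1. rewrite !Hi. auto.
Qed.

Lemma fold_axis {X} {d : X -> X -> R} (HT : real_tree d) h del tau :
  isometry d h -> axis d h del tau -> fold_prop d h tau.
Proof.
  intros Hiso Ha. pose proof Hiso as [Hi _].
  pose proof Ha as [Hl [Ht Hdel]].
  split; [lra|]. intros z.
  destruct (proj_line HT del z Hl) as [e0 [eps [Heps Hz]]].
  pose proof (axis_disp HT h del tau z e0 eps Hiso Ha Hz) as HD.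
  pose proof (axis_shift HT h del tau z e0 eps Hiso Ha Hz) as Hs.
  rewrite HD. split; [lra|].
  intros m p u H1 H2 Hu H3 H4.
  assert (Hm : m = del (e0 + tau/2)).
  { apply (uniq_pt HT z (h z) m (del (e0 + tau/2)) (2*eps+tau) ((2*eps+tau)/2)); auto.
    - lra.
    - rewrite Hz. rabs; lra.
    - rewrite dsym, Hs; auto. rabs; lra. }
  subst m.
  assert (P1 : d (del e0) p <= u - tau/2).
  { pose proof (two_pts HT (del (e0 + tau/2)) z (del e0) p ((2*eps+tau)/2) (tau/2) u) as T.
    assert (d (del (e0 + tau / 2)) z = (2 * eps + tau) / 2) by (rewrite dsym, Hz; auto; rabs; lra).
    assert (d (del (e0 + tau / 2)) (del e0) = tau / 2) by (rewrite Hl; rabs; lra).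
    assert (d (del e0) z = (2 * eps + tau) / 2 - tau / 2) by (rewrite dsym, Hz; auto; rabs; lra).
    specialize (T H H0 H5 H3 H4). rabs; lra. }
  assert (P2 : d (del (e0 + tau)) (h p) = d (del e0) p) by (rewrite <- Hdel, Hi; auto).
  assert (P3 : d (del (e0 + tau/2)) (del (e0 + tau)) = tau/2) by (rewrite Hl; rabs; lra).
  assert (P4 : d (h p) (h z) = (2*eps+tau)/2 - u) by (rewrite Hi; auto).
  pose proof (dtri HT (del (e0 + tau / 2)) (del (e0 + tau)) (h p)).
  pose proof (dtri HT (del (e0 + tau / 2)) (h p) (h z)).
  split; lra.
Qed.

Lemma fold_of_transl {X} {d : X -> X -> R} (HT : real_tree d) h th :
  isometry d h -> transl_length d h th -> fold_prop d h th.
Proof.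
  intros Hi [[He Ht]|[del Ha]].
  - subst. apply fold_elliptic; auto.
  - apply (fold_axis HT h del); auto.
Qed.


Lemma iso_iter {X} {d : X -> X -> R} g :
  (forall x y, d (g x) (g y) = d x y) ->
  forall n a b, d (Nat.iter n g a) (Nat.iter n g b) = d a b.
Proof. intros Hi n; induction n; intros a b; simpl; auto. rewrite Hi; auto. Qed.

Lemma iter_cancel {X} (g gi : X -> X) :
  (forall y, g (gi y) = y) -> forall n w, Nat.iter n g (Nat.iter n gi w) = w.
Proof.
  intros H n; induction n; intros w; [reflexivity|].
  change (Nat.iter (S n) gi w) with (gi (Nat.iter n gi w)).
  rewrite Nat.iter_succ_r, H. apply IHn.
Qed.

Lemma build_axis {X} {d : X -> X -> R} (HT : real_tree d) g gi tau w :
  (forall x y, d (g x) (g y) = d x y) ->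
  (forall y, g (gi y) = y) -> (forall y, gi (g y) = y) ->
  0 < tau -> (forall n, d w (Nat.iter n g w) = INR n * tau) ->
  exists gam, axis d g gam tau.
Proof.
  intros Hi Hgi Hig Ht Hw.
  assert (Hii : forall x y, d (gi x) (gi y) = d x y).
  { intros x y. rewrite <- Hi, !Hgi. auto. }
  set (Gn := fun n => Nat.iter n g w).
  set (In := fun n => Nat.iter n gi w).
  assert (dGG : forall i j, (i <= j)%nat -> d (Gn i) (Gn j) = (INR j - INR i) * tau).
  { intros i j Hij. unfold Gn; cbv beta.
    replace (Nat.iter j g w) with (Nat.iter (i + (j - i)) g w) by (f_equal; lia). rewrite Nat.iter_add.
    rewrite iso_iter, Hw; auto. rewrite minus_INR; auto. }
  assert (dIG : forall i j, d (In i) (Gn j) = (INR i + INR j) * tau).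
  { intros i j. rewrite <- (iso_iter g Hi i). unfold In, Gn; cbv beta.
    rewrite iter_cancel by auto. rewrite <- Nat.iter_add, Hw, plus_INR. auto. }
  assert (dII : forall i j, (j <= i)%nat -> d (In i) (In j) = (INR i - INR j) * tau).
  { intros i j Hij. rewrite <- (iso_iter g Hi i). unfold In; cbv beta.
    rewrite iter_cancel by auto.
    replace (Nat.iter i g (Nat.iter j gi w)) with (Nat.iter ((i - j) + j) g (Nat.iter j gi w)) by (f_equal; lia). rewrite Nat.iter_add.
    rewrite iter_cancel by auto. rewrite Hw, minus_INR; auto. }
  set (Ch := fun t z N => Rabs t <= INR N * tau /\ d (In N) z = t + INR N * tau
                          /\ d z (Gn N) = INR N * tau - t).
  assert (Up : forall t z N M, (N <= M)%nat -> Ch t z N -> Ch t z M).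
  { intros t z N M HNM [C1 [C2 C3]].
    assert (HM : INR N * tau <= INR M * tau) by (apply Rmult_le_compat_r; [lra|apply le_INR; auto]).
    pose proof (dtri HT (In M) (In N) z). rewrite dII in H by auto.
    pose proof (dtri HT z (Gn N) (Gn M)). rewrite dGG in H0 by auto.
    pose proof (dtri HT (In M) z (Gn M)). rewrite dIG in H1.
    unfold Ch. rabs; repeat split; lra. }
  assert (Un : forall t z z' N, Ch t z N -> Ch t z' N -> z = z').
  { intros t z z' N [C1 [C2 C3]] [D1 [D2 D3]].
    apply (uniq_pt HT (In N) (Gn N) z z' ((INR N + INR N) * tau) (t + INR N * tau));
      auto; try rewrite C3; try rewrite D3; auto; lra. }
  assert (Ex : forall t, exists z, exists N, Ch t z N).
  { intros t. destruct (INR_archimed tau (Rabs t) Ht) as [N HN].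
    destruct (seg_point HT (In N) (Gn N) (t + INR N * tau)) as [z [Z1 Z2]].
    { rewrite dIG. rabs; lra. }
    exists z, N. unfold Ch. rewrite dIG in Z2. repeat split; auto; lra. }
  set (gam := fun t => proj1_sig (constructive_indefinite_description _ (Ex t))).
  assert (Hgam : forall t, exists N, Ch t (gam t) N).
  { intros t. unfold gam. destruct (constructive_indefinite_description _ (Ex t)). auto. }
  exists gam. split; [|split; auto].
  - intros s t. destruct (Hgam s) as [N HN]. destruct (Hgam t) as [N' HN'].
    apply (Up _ _ _ (Nat.max N N') (Nat.le_max_l _ _)) in HN.
    apply (Up _ _ _ (Nat.max N N') (Nat.le_max_r _ _)) in HN'.
    destruct HN as [C1 [C2 C3]]. destruct HN' as [D1 [D2 D3]].
    rewrite (two_pts_eq HT _ _ _ _ _ _ _ (dIG _ _) C2 ltac:(rewrite C3; lra) D2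
               ltac:(rewrite D3; lra)).
    f_equal; ring.
  - intros t. destruct (Hgam t) as [N [C1 [C2 C3]]].
    assert (Ch (t + tau) (g (gam t)) (S N)) as HC.
    { pose proof (dtri HT (In (S N)) (g (In N)) (g (gam t))).
      rewrite Hi, C2 in H.
      assert (E1 : d (g (In N)) (In (S N)) = 2 * tau).
      { rewrite <- Hii, Hig. replace (gi (In (S N))) with (In (S (S N))) by reflexivity.
        rewrite (dsym HT), dII by lia. rewrite !S_INR. lra. }
      assert (E2 : d (g (gam t)) (Gn (S N)) = INR N * tau - t).
      { replace (Gn (S N)) with (g (Gn N)) by reflexivity. rewrite Hi. auto. }
      pose proof (dtri HT (In (S N)) (g (gam t)) (Gn (S N))). rewrite dIG in H0.
      rewrite (dsym HT (In (S N)) (g (In N))), E1 in H.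
      unfold Ch. rewrite S_INR in *. rewrite Rmult_plus_distr_r, Rmult_1_l in *.
      rabs; repeat split; lra. }
    destruct (Hgam (t + tau)) as [N' HN'].
    apply (Up _ _ _ (Nat.max (S N) N') (Nat.le_max_l _ _)) in HC.
    apply (Up _ _ _ (Nat.max (S N) N') (Nat.le_max_r _ _)) in HN'.
    apply (Un _ _ _ _ HC HN').
Qed.


Lemma iso_inverse {X} {d : X -> X -> R} (HT : real_tree d) g :
  isometry d g -> exists gi, (forall y, g (gi y) = y) /\ (forall y, gi (g y) = y).
Proof.
  intros [Hi Hs].
  exists (fun y => proj1_sig (constructive_indefinite_description _ (Hs y))).
  split.
  - intros y. destruct (constructive_indefinite_description _ (Hs y)). auto.
  - intros y. destruct (constructive_indefinite_description _ (Hs (g y))) as [z Hz]. simpl.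
    apply (deq0 HT). rewrite <- Hi, Hz, drefl; auto. lra.
Qed.

Lemma classify {X} {d : X -> X -> R} (HT : real_tree d) g (x0 : X) :
  isometry d g -> elliptic g \/ exists gam tau, axis d g gam tau.
Proof.
  intros Hiso. pose proof Hiso as [Hi _].
  destruct (iso_inverse HT g Hiso) as [gi [Hgi Hig]].
  set (x1 := g x0). set (x2 := g x1). set (x3 := g x2).
  assert (D12 : d x1 x2 = d x0 x1) by (unfold x2, x1; rewrite Hi; auto).
  assert (D13 : d x1 x3 = d x0 x2) by (unfold x3, x1; rewrite Hi; auto).
  destruct (Rle_dec (d x0 x2) (d x0 x1)) as [HE|HE].
  - left.
    destruct (seg_point HT x0 x1 (d x0 x1 / 2)) as [m [M1 M2]].
    { pose proof (dpos HT x0 x1). lra. }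
    exists m. apply (mid_fixed HT g x0 m Hiso); auto. fold x1. lra.
  - right.
    remember (d x0 x1) as D eqn:HD. remember (d x0 x2) as E eqn:HEE.
    set (r := (2*D - E)/2). set (tau := E - D).
    assert (HE2 : E <= 2 * D) by (pose proof (dtri HT x0 x1 x2); lra).
    assert (Hr : 0 <= r) by (unfold r; lra).
    destruct (seg_point HT x1 x0 r) as [w [W1 W2]].
    { rewrite dsym; auto. unfold r. lra. }
    rewrite (dsym HT x1 x0), <- HD in W2.
    assert (W3 : d w x2 = D - r).
    { pose proof (dtri HT x1 w x2).
      destruct (fp4 HT x2 w x0 x1) as [F|F];
      rewrite ?(dsym HT x2 x0), ?(dsym HT w x1), ?(dsym HT x2 x1), ?(dsym HT x2 w) in F;
      rewrite <- ?HD, <- ?HEE in *; unfold r in *; lra. }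
    assert (W4 : d x1 (g w) = D - r) by (unfold x1; rewrite Hi; rewrite dsym; auto).
    assert (W5 : d (g w) x2 = r) by (unfold x2; rewrite Hi; rewrite dsym; auto).
    assert (T1 : d w (g w) = tau).
    { rewrite (two_pts_eq HT x1 x2 w (g w) D r (D - r)); auto; try lra.
      unfold tau, r. rabs; lra. }
    assert (W6 : d (g w) x3 = D - r) by (unfold x3; rewrite Hi; auto).
    assert (W7 : d (g (g w)) x3 = r) by (unfold x3; rewrite Hi; auto).
    assert (T1' : d (g w) (g (g w)) = tau) by (rewrite Hi; auto).
    assert (W8 : d x1 (g (g w)) = E - r).
    { pose proof (dtri HT x1 (g w) (g (g w))). pose proof (dtri HT x1 (g (g w)) x3).
      unfold tau, r in *. lra. }
    assert (W9 : d w x3 = E - r).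
    { pose proof (dtri HT w (g w) x3). pose proof (dtri HT x1 w x3).
      unfold tau, r in *. lra. }
    assert (T2 : d w (g (g w)) = 2 * tau).
    { rewrite (two_pts_eq HT x1 x3 w (g (g w)) E r (E - r)); auto; try lra.
      unfold tau, r. rabs; lra. }
    assert (Htau : 0 < tau) by (unfold tau; lra).
    assert (Hw : forall n, d w (Nat.iter n g w) = INR n * tau
                           /\ d w (Nat.iter (S n) g w) = INR (S n) * tau).
    { induction n.
      - simpl. rewrite drefl; auto. split; lra.
      - destruct IHn as [I1 I2]. split; auto.
        pose proof (gluing HT w (Nat.iter n g w) (Nat.iter (S n) g w) (Nat.iter (S (S n)) g w)) as G.
        assert (A1 : d (Nat.iter n g w) (Nat.iter (S n) g w) = tau).
        { rewrite Nat.iter_succ_r, iso_iter; auto. }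
        assert (A2 : d (Nat.iter n g w) (Nat.iter (S (S n)) g w) = 2*tau).
        { rewrite !Nat.iter_succ_r, iso_iter; auto. }
        assert (A3 : d (Nat.iter (S n) g w) (Nat.iter (S (S n)) g w) = tau).
        { rewrite (Nat.iter_succ_r (S n)), iso_iter; auto. }
        rewrite A1, A2, A3, I1, I2 in G. rewrite !S_INR in *.
        rewrite G; try lra. }
    destruct (build_axis HT g gi tau w Hi Hgi Hig Htau) as [gam Hgam].
    { intros n. apply Hw. }
    exists gam, tau. auto.
Qed.


Lemma core_crease {X} {d : X -> X -> R} (HT : real_tree d) g h gam tg th x :
  isometry d g -> isometry d h -> axis d g gam tg -> transl_length d h th ->
  th < tg -> g (h x) = x -> crease_condition d g h.
Proof.
  intros Hig Hih Ha Htr Hlt Hfix.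
  pose proof (fold_of_transl HT h th Hih Htr) as [Hth0 Fold].
  pose proof Hig as [Gi _]. pose proof Ha as [Hl [Htg Hgam]].
  destruct (proj_line HT gam x Hl) as [c [e [He Hx]]].
  set (y := h x) in *.
  assert (Hy : forall t, d y (gam t) = e + Rabs (t - (c - tg))).
  { intro t. rewrite <- Gi, Hfix, Hgam, Hx. f_equal. f_equal. ring. }
  assert (HD : d x y = 2*e + tg).
  { pose proof (axis_disp HT g gam tg y (c - tg) e Hig Ha Hy). rewrite Hfix in H.
    rewrite dsym; auto. }
  destruct (Fold x) as [_ F]. fold y in F. rewrite HD in F.
  assert (Hm1 : d x (gam (c - tg/2)) = (2*e+tg)/2) by (rewrite Hx; rabs; lra).
  assert (Hm2 : d (gam (c - tg/2)) y = (2*e+tg)/2) by (rewrite dsym, Hy; auto; rabs; lra).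
  assert (Hmap : forall t, c - tg/2 + th/2 <= t <= c -> h (gam t) = gam (2*c - tg - t)).
  { intros t Ht.
    destruct (F (gam (c - tg/2)) (gam t) (t - c + tg/2)) as [F1 F2]; auto.
    - lra.
    - rewrite Hl. rabs; lra.
    - rewrite dsym, Hx; auto. rabs; lra.
    - apply (uniq_pt HT (gam (c - tg/2)) y (h (gam t)) (gam (2*c - tg - t))
               ((2*e+tg)/2) (t - c + tg/2)); auto.
      + rewrite Hl. rabs; lra.
      + rewrite dsym, Hy; auto. rabs; lra. }
  exists gam, tg, th, (c - tg/2 + th/2), c.
  split; auto. split; auto. split; auto. split; [|lra].
  split; [lra|]. split.
  - intros t Ht. exists (2*c - tg - t). apply Hmap. auto.
  - exists (2*c - tg - (c - tg/2 + th/2)), (2*c - tg - c).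
    split; [apply Hmap; lra|]. split; [apply Hmap; lra|]. lra.
Qed.

Lemma core_opposite {X} {d : X -> X -> R} (HT : real_tree d) g h gam del tau x :
  isometry d g -> isometry d h -> axis d g gam tau -> axis d h del tau ->
  g (h x) = x -> opposite_axes_condition d g h.
Proof.
  intros Hig Hih Ha Hb Hfix.
  pose proof Hig as [Gi _]. pose proof Ha as [Hl [Htg Hgam]].
  pose proof Hb as [Hl2 [_ Hdel]].
  destruct (proj_line HT gam x Hl) as [c [e [He Hx]]].
  destruct (proj_line HT del x Hl2) as [e0 [ep [Hep Hx2]]].
  set (y := h x) in *.
  assert (Hy : forall t, d y (gam t) = e + Rabs (t - (c - tau))).
  { intro t. rewrite <- Gi, Hfix, Hgam, Hx. f_equal. f_equal. ring. }
  assert (Hy2 : forall t, d y (del t) = ep + Rabs (t - tau - e0))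
    by (apply (axis_shift HT h del tau x e0 ep Hih Hb Hx2)).
  assert (HD : d x y = 2*e + tau).
  { pose proof (axis_disp HT g gam tau y (c - tau) e Hig Ha Hy). rewrite Hfix in H.
    rewrite dsym; auto. }
  assert (HD2 : d x y = 2*ep + tau) by (apply (axis_disp HT h del tau x e0 ep Hih Hb Hx2)).
  assert (Hee : ep = e) by lra. subst ep.
  assert (Hm : gam (c - tau/2) = del (e0 + tau/2)).
  { apply (uniq_pt HT x y _ _ (2*e+tau) ((2*e+tau)/2)); auto.
    - rewrite Hx. rabs; lra.
    - rewrite dsym, Hy; auto. rabs; lra.
    - rewrite Hx2. rabs; lra.
    - rewrite dsym, Hy2; auto. rabs; lra. }
  exists gam, del, tau, (c - tau), c, (c + e0).
  split; auto. split; auto. split; [lra|].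
  intros t Ht.
  destruct (Rle_dec (c - tau/2) t).
  - apply (uniq_pt HT (gam (c - tau/2)) x _ _ ((2*e+tau)/2) (t - c + tau/2)).
    + rewrite dsym, Hx; auto. rabs; lra.
    + rewrite Hl. rabs; lra.
    + rewrite dsym, Hx; auto. rabs; lra.
    + rewrite Hm, Hl2. rabs; lra.
    + rewrite dsym, Hx2; auto. rabs; lra.
  - apply (uniq_pt HT (gam (c - tau/2)) y _ _ ((2*e+tau)/2) (c - tau/2 - t)).
    + rewrite dsym, Hy; auto. rabs; lra.
    + rewrite Hl. rabs; lra.
    + rewrite dsym, Hy; auto. rabs; lra.
    + rewrite Hm, Hl2. rabs; lra.
    + rewrite dsym, Hy2; auto. rabs; lra.
Qed.


Lemma crease_elliptic {X} {d : X -> X -> R} (HT : real_tree d) g h :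
  isometry d g -> isometry d h -> crease_condition d g h ->
  elliptic (fun x => g (h x)).
Proof.
  intros Hig Hih [gam [tg [th [a [b [Ha [Htr [Hlt [Hcr Hlen]]]]]]]]].
  destruct Hcr as [Hab [Himg [s [s' [Hs [Hs' [Hss Hsa]]]]]]].
  pose proof (fold_of_transl HT h th Hih Htr) as [Hth0 Fold].
  pose proof Hih as [Hi _]. pose proof Ha as [Hl [Htg Hgam]].
  assert (Hsb : s - s' = b - a).
  { pose proof (Hi (gam a) (gam b)). rewrite Hs, Hs', !Hl in H. rabs; lra. }
  destruct (Fold (gam a)) as [HDth F].
  rewrite Hs, Hl in HDth, F.
  replace (Rabs (a - s)) with (a - s) in HDth, F by (rabs; lra).
  set (t0 := (a + s)/2 + tg/2).
  assert (Hh : h (gam t0) = gam (t0 - tg)).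
  { destruct (Rle_dec t0 a).
    - destruct (F (gam ((a+s)/2)) (gam t0) (tg/2)) as [F1 F2].
      + rewrite Hl. rabs; lra.
      + rewrite Hl. rabs; lra.
      + unfold t0 in *; lra.
      + rewrite Hl. unfold t0 in *. rabs; lra.
      + rewrite Hl. unfold t0 in *. rabs; lra.
      + idtac.
        apply (uniq_pt HT (gam ((a+s)/2)) (gam s) _ _ ((a-s)/2) (tg/2)); auto.
        * rewrite Hl. rabs; lra.
        * rewrite Hl. unfold t0 in *. rabs; lra.
        * rewrite Hl. unfold t0 in *. rabs; lra.
    - assert (Hr : a <= t0 <= b) by (unfold t0 in *; lra).
      destruct (Himg t0 Hr) as [uu Hu].
      rewrite Hu. f_equal.
      pose proof (Hi (gam t0) (gam a)) as E1. rewrite Hu, Hs, !Hl in E1.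
      pose proof (Hi (gam t0) (gam b)) as E2. rewrite Hu, Hs', !Hl in E2.
      unfold t0 in *. rabs; lra. }
  exists (gam t0). rewrite Hh, Hgam. f_equal. ring.
Qed.

Lemma elliptic_swap {X} (g h : X -> X) :
  elliptic (fun x => h (g x)) -> elliptic (fun x => g (h x)).
Proof. intros [x Hx]. exists (g x). rewrite Hx. auto. Qed.

Lemma opposite_elliptic {X} {d : X -> X -> R} (HT : real_tree d) g h :
  opposite_axes_condition d g h -> elliptic (fun x => g (h x)).
Proof.
  intros [gam [del [tau [a [b [c [Ha [Hb [Hlen Heq]]]]]]]]].
  destruct Ha as [_ [Ht Hg]]. destruct Hb as [_ [_ Hh]].
  exists (gam b).
  rewrite (Heq b) by lra. rewrite Hh.
  replace (c - b + tau) with (c - (b - tau)) by ring.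
  rewrite <- Heq by lra. rewrite Hg, <- (Heq b) by lra. f_equal. ring.
Qed.


Theorem proposition2p15 (X : Type) (d : X -> X -> R) (HT : real_tree d)
    (g h : X -> X) (Hg : isometry d g) (Hh : isometry d h) :
  elliptic (fun x => g (h x)) <->
  ((elliptic g /\ elliptic h /\ exists x, g x = x /\ h x = x)
   \/ crease_condition d g h \/ crease_condition d h g
   \/ opposite_axes_condition d g h).
Proof.
  split.
  - intros [x Hx].
    assert (Hx' : h (g (h x)) = h x) by (rewrite Hx; auto).
    destruct (classify HT g x Hg) as [Eg|[gam [tg Ag]]];
    destruct (classify HT h x Hh) as [Eh|[del [th Ah]]].
    + left. split; auto. split; auto.
      destruct (seg_point HT x (h x) (d x (h x) / 2)) as [m [M1 M2]].
      { pose proof (dpos HT x (h x)). lra. }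
      exists m.
      destruct (fold_elliptic HT h Hh Eh) as [_ Fh].
      destruct (fold_elliptic HT g Hg Eg) as [_ Fg].
      destruct (Fh x) as [_ F1]. destruct (Fg (h x)) as [_ F2].
      rewrite Hx in F2.
      pose proof (dpos HT x (h x)) as P0.
      assert (R0 : d m m = 0) by (apply drefl; auto).
      destruct (F1 m m 0) as [G1 _]; try lra; try (rewrite dsym; auto; lra).
      assert (S1 : d (h x) x = d x (h x)) by (apply dsym; auto).
      rewrite S1 in F2.
      destruct (F2 m m 0) as [G2 _]; try lra; try (rewrite dsym; auto; lra).
      split; symmetry; apply (deq0 HT); lra.
    + right. right. left.
      pose proof Ah as [_ [Hth _]].
      apply (core_crease HT h g del th 0 (h x)); auto. left; auto.
    + right. left. pose proof Ag as [_ [Htg _]].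
      apply (core_crease HT g h gam tg 0 x); auto. left; auto.
    + destruct (total_order_T th tg) as [[Hlt|Heq]|Hgt].
      * right. left. apply (core_crease HT g h gam tg th x); auto. right. exists del; auto.
      * subst. right. right. right. apply (core_opposite HT g h gam del tg x); auto.
      * right. right. left. apply (core_crease HT h g del th tg (h x)); auto. right. exists gam; auto.
  - intros [[_ [_ [x [H1 H2]]]]|[C|[C|C]]].
    + exists x. rewrite H2, H1. auto.
    + apply (crease_elliptic HT g h); auto.
    + apply elliptic_swap. apply (crease_elliptic HT h g); auto.
    + apply (opposite_elliptic HT g h); auto.
Qed.
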